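(* Let $n\ge0$, $\alpha\ge1$ be integers, $N=2^{n+1}$, $c=2^\alpha+1$, and consider the $c$-DAG over the uniform dataset $\{0,\dots,N-1\}$ (described in the context). Let $s$ be a real number with $1<s\le N$ and $\kappa=\lfloor\log_2(N/s)\rfloor$. If $2^{n-\kappa}<s\le\frac{c-2}{c-1}2^{n-\kappa+1}$, then for every $x\in[0,N-s]$ the query $Q=[x,x+s)$ satisfies $\mathrm{level}_{c\text{-DAG}}(Q)=\kappa$.
   Context: The $c$-DAG over $\mathcal{D}=\{0,\dots,N-1\}\subset[0,N)$ has levels $\ell=0,\dots,n+1$; with $u_\ell=2^{n-\ell+1}/(c-1)$, its level-$\ell$ nodes are the intervals $[mu_\ell,\,mu_\ell+2^{n-\ell+1})$, $m=0,1,\dots,(c-1)2^\ell-(c-1)$ (a node $[a,a+L)$ has children $[a+jL/(2(c-1)),\,a+jL/(2(c-1))+L/2)$, $j=0,\dots,c-1$). SRC-search returns a node of the deepest level whose interval contains $Q$; $\mathrm{level}_{c\text{-DAG}}(Q)$ is the largest $\ell$ such that some level-$\ell$ node contains $Q$. *)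

(* Defs.v *)
From Stdlib Require Import Reals ZArith Lra Lia.
Open Scope R_scope.

(* Level l (0 <= l <= n+1) has node length L_l = 2^(n-l+1) and shift
   u_l = 2^(n-l+1)/(c-1); its nodes are [m*u_l, m*u_l + L_l) for
   m = 0, 1, ..., (c-1)*2^l - (c-1). *)

Definition node_len (n l : nat) : R := 2 ^ (n + 1 - l).
Definition node_shift (n c l : nat) : R := node_len n l / INR (c - 1).

Definition node_left (n c l m : nat) : R := INR m * node_shift n c l.

Definition is_node_index (c l m : nat) : Prop :=
  (m <= (c - 1) * 2 ^ l - (c - 1))%nat.

Definition interval_contains (a L x s : R) : Prop := a <= x /\ x + s <= a + L.

Definition level_has_node (n c l : nat) (x s : R) : Prop :=
  (l <= n + 1)%nat /\
  exists m : nat, is_node_index c l m /\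
    interval_contains (node_left n c l m) (node_len n l) x s.

Definition cdag_level_is (n c : nat) (x s : R) (l : nat) : Prop :=
  level_has_node n c l x s /\
  forall l' : nat, (l < l')%nat -> ~ level_has_node n c l' x s.

Definition floor_log2 (y : R) : Z := Int_part (ln y / ln 2).

(* Main.v *)
Require Import Defs.
From Stdlib Require Import Reals ZArith Lra Lia.
Open Scope R_scope.

Lemma pow2_ge1 (k : nat) : 1 <= 2 ^ k.
Proof. apply pow_R1_Rle; lra. Qed.

Lemma powerRZ_le1 (z : Z) : (z <= 0)%Z -> powerRZ 2 z <= 1.
Proof.
  destruct z as [|p|p]; simpl; intros H; try lra; try lia.
  pose proof (pow2_ge1 (Pos.to_nat p)).
  rewrite <- Rinv_1. apply Rinv_le_contravar; lra.
Qed.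

Lemma powerRZ_ge (z : Z) (k : nat) : (Z.of_nat k <= z)%Z -> 2 ^ k <= powerRZ 2 z.
Proof.
  destruct z as [|p|p]; simpl; intros H.
  - assert (k = 0%nat) by lia. subst. simpl. lra.
  - apply Rle_pow; [lra|]. lia.
  - lia.
Qed.

Theorem lemma2 (n alpha : nat) (s : R) :
  (1 <= alpha)%nat ->
  let N := (2 ^ (n + 1))%nat in
  let c := (2 ^ alpha + 1)%nat in
  1 < s -> s <= INR N ->
  let kappa := floor_log2 (INR N / s) in
  powerRZ 2 (Z.of_nat n - kappa) < s ->
  s <= (INR c - 2) / (INR c - 1) * powerRZ 2 (Z.of_nat n - kappa + 1) ->
  forall x : R, 0 <= x -> x <= INR N - s ->
  cdag_level_is n c x s (Z.to_nat kappa).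
Proof.
  intros Ha N c Hs1 HsN kappa Hlo Hhi x Hx0 HxN.
  clearbody kappa.
  assert (HN : INR N = 2 ^ (n + 1)) by (unfold N; rewrite pow_INR; reflexivity).
  assert (HA : 2 <= 2 ^ alpha).
  { replace 2 with (2 ^ 1) at 1 by (simpl; lra). apply Rle_pow; [lra|lia]. }
  assert (Hc : INR c = 2 ^ alpha + 1).
  { unfold c. rewrite plus_INR, pow_INR. replace (INR 2) with 2 by (simpl; lra). simpl INR. lra. }
  assert (Hc1 : INR (c - 1) = 2 ^ alpha).
  { unfold c. replace (2 ^ alpha + 1 - 1)%nat with (2 ^ alpha)%nat by (rewrite Nat.add_sub; reflexivity).
    rewrite pow_INR. reflexivity. }
  rewrite Hc in Hhi.
  replace (2 ^ alpha + 1 - 2) with (2 ^ alpha - 1) in Hhi by lra.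
  replace (2 ^ alpha + 1 - 1) with (2 ^ alpha) in Hhi by lra.
  assert (Hk0 : (0 <= kappa)%Z).
  { destruct (Z_lt_le_dec kappa 0) as [H|H]; [|exact H].
    exfalso. assert (2 ^ (n+1) <= powerRZ 2 (Z.of_nat n - kappa)).
    { apply powerRZ_ge. lia. } lra. }
  assert (Hkn : (kappa <= Z.of_nat n)%Z).
  { destruct (Z_le_gt_dec kappa (Z.of_nat n)) as [H|H]; [exact H|].
    exfalso. pose proof (powerRZ_le1 (Z.of_nat n - kappa + 1) ltac:(lia)).
    assert (0 <= powerRZ 2 (Z.of_nat n - kappa + 1)).
    { apply Rlt_le, powerRZ_lt; lra. }
    assert (0 <= (2 ^ alpha - 1) / 2 ^ alpha <= 1).
    { split. apply Rmult_le_pos; [lra|left; apply Rinv_0_lt_compat; lra].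
      apply Rmult_le_reg_r with (2 ^ alpha); [lra|].
      unfold Rdiv. rewrite Rmult_assoc, Rinv_l by lra. lra. }
    nra. }
  set (k := Z.to_nat kappa).
  assert (Hkk : kappa = Z.of_nat k) by (unfold k; lia).
  assert (Hkn' : (k <= n)%nat) by lia.
  rewrite Hkk in Hlo, Hhi.
  replace (Z.of_nat n - Z.of_nat k)%Z with (Z.of_nat (n - k)) in Hlo by lia.
  replace (Z.of_nat n - Z.of_nat k + 1)%Z with (Z.of_nat (n + 1 - k)) in Hhi by lia.
  rewrite <- pow_powerRZ in Hlo, Hhi.
  set (L := 2 ^ (n + 1 - k)) in Hhi.
  set (A := 2 ^ alpha) in *.
  assert (HL : 2 ^ k * L = 2 ^ (n+1)).
  { unfold L. rewrite <- pow_add. f_equal. lia. }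
  assert (HLpos : 0 < L) by (apply pow_lt; lra).
  assert (Hu : (A - 1) / A * L = L - L / A) by (field; lra).
  rewrite Hu in Hhi.
  assert (Hupos : 0 < L / A) by (apply Rdiv_lt_0_compat; lra).
  split.
  - split; [lia|].
    set (M := ((c - 1) * 2 ^ k - (c - 1))%nat).
    assert (HM : INR M * (L / A) = 2 ^ (n+1) - L).
    { unfold M. rewrite minus_INR.
      2:{ pose proof (Nat.pow_le_mono_r 2%nat 0%nat k ltac:(lia) ltac:(lia)) as Hp; rewrite Nat.pow_0_r in Hp; nia. }
      rewrite mult_INR, Hc1, pow_INR. replace (INR 2) with 2 by (simpl; lra). fold A. rewrite <- HL. field. lra. }
    assert (Hsh : node_shift n c k = L / A).
    { unfold node_shift, node_len. rewrite Hc1. reflexivity. }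
    set (z := Int_part (x / (L / A))).
    destruct (base_Int_part (x / (L / A))) as [Hz1 Hz2]. fold z in Hz1, Hz2.
    assert (Hz0 : (0 <= z)%Z).
    { assert (0 <= x / (L / A)) by (apply Rmult_le_pos; [lra|left; apply Rinv_0_lt_compat; lra]).
      assert (-1 < IZR z) by lra. apply lt_IZR in H0. lia. }
    set (m := Z.to_nat z).
    assert (Hm : INR m = IZR z) by (unfold m; rewrite INR_IZR_INZ, Z2Nat.id; auto).
    assert (Hmu1 : INR m * (L / A) <= x).
    { rewrite Hm. apply Rmult_le_reg_r with (/ (L / A)).
      apply Rinv_0_lt_compat; lra.
      rewrite Rmult_assoc, Rinv_r by lra. lra. }
    assert (Hmu2 : x < INR m * (L / A) + L / A).
    { rewrite Hm. apply Rmult_lt_reg_r with (/ (L / A)).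
      apply Rinv_0_lt_compat; lra.
      rewrite Rmult_plus_distr_r, Rmult_assoc, Rinv_r by lra.
      replace (x * / (L / A)) with (x / (L / A)) by reflexivity. lra. }
    destruct (Nat.le_gt_cases m M) as [Hle|Hgt].
    + exists m. split; [exact Hle|].
      unfold interval_contains, node_left, node_len. rewrite Hsh. fold L. lra.
    + exists M. split; [unfold is_node_index, M; lia|].
      unfold interval_contains, node_left, node_len. rewrite Hsh. fold L.
      assert (INR M + 1 <= INR m).
      { rewrite <- S_INR. apply le_INR. lia. }
      assert (INR M * (L/A) + L/A <= INR m * (L/A)) by nra.
      rewrite HN in HxN. lra.
  - intros l' Hl' [Hl'n [m [_ [Hc3 Hc2]]]].
    unfold node_len in Hc2.
    assert (2 ^ (n + 1 - l') <= 2 ^ (n - k)) by (apply Rle_pow; [lra|lia]).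
    lra.
Qed.
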